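(* For every program $p$, at most one of the following holds: $\mathrm{gvar}(p)$ (i.e. $\mathrm{gvar}_x(p)$ for some variable $x$), $\mathrm{uabs}(p)$, $\mathrm{uinert}(p)$. Moreover: (1) if $\mathrm{gvar}_x(p)$ then $\mathrm{unf}(p)=x$; (2) if $\mathrm{uabs}(p)$ then $\mathrm{unf}(p)$ is a value; (3) if $\mathrm{uinert}(p)$ then $\mathrm{unf}(p)$ is a non-variable inert term.
   Context: Terms $t,u ::= x\mid\lambda x.t\mid t\,u$; values $v ::= \lambda x.t$ (variables are not values); environments $E ::= \epsilon\mid E[x\leftarrow t]$; programs $p ::= (t,E)$, with $x$ bound in $E$ and $u$ in $(u,E[x\leftarrow t])$, up to $\alpha$; appended ES bind fresh variables; $(t,E)@[x\leftarrow u]:=(t,E[x\leftarrow u])$. Inert terms $i ::= x\mid i\,f$, fireballs $f ::= v\mid i$, non-variable inert terms $i^{+} ::= i\,f$. Needed variables: $nv(x)=\{x\}$, $nv(\lambda x.t)=\emptyset$, $nv(tu)=nv(t)\cup nv(u)$; $nv((t,\epsilon))=nv(t)$, $nv((t,E[x\leftarrow u]))=nv((t,E))$ if $x\notin nv((t,E))$, else $(nv((t,E))\setminus\{x\})\cup nv(u)$. Applied variables: $an(\lambda x.t)=an(x)=\emptyset$, $an(tu)=\{x\}\cup an(u)$ if $t=x$ variable, else $an(t)\cup an(u)$; $an((t,\epsilon))=an(t)$; $an((t,E[x\leftarrow u]))$ is $an((t,E))$ if $x\notin nv((t,E))$; $(an((t,E))\setminus\{x\})\cup an(u)$ if $x\in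 nv((t,E))$ and ($x\notin an((t,E))$ or $u$ not a variable); $(an((t,E))\setminus\{x\})\cup\{y\}$ if $x\in nv((t,E))$, $x\in an((t,E))$, $u=y$ variable. Unapplied variables: $un(\lambda x.t)=\emptyset$, $un(x)=\{x\}$, $un(tu)=un(u)$ if $t$ variable, else $un(t)\cup un(u)$; $un((t,\epsilon))=un(t)$; $un((t,E[x\leftarrow u]))$ is $un((t,E))$ if $x\notin un((t,E))$ and ($x\notin nv((t,E))$ or $u$ a variable), and $(un((t,E))\setminus\{x\})\cup un(u)$ if $x\in un((t,E))$ or ($x\in nv((t,E))$ and $u$ not a variable). Predicates, inductively. $\mathrm{gvar}_x((x,\epsilon))$; $\mathrm{gvar}_x(p)\Rightarrow\mathrm{gvar}_y(p@[x\leftarrow y])$; $\mathrm{gvar}_x(p)$, $z\neq x$ $\Rightarrow$ $\mathrm{gvar}_x(p@[z\leftarrow t])$. $\mathrm{uabs}((v,\epsilon))$; $\mathrm{gvar}_x(p)\Rightarrow\mathrm{uabs}(p@[x\leftarrow v])$; $\mathrm{uabs}(p)\Rightarrow\mathrm{uabs}(p@[x\leftarrow t])$. $\mathrm{uinert}((i^{+},\epsilon))$; $\mathrm{gvar}_x(p)\Rightarrow\mathrm{uinert}(p@[x\leftarrow i^{+}])$; $\mathrm{uinert}(p)$, $x\in nv(p)$ $\Rightarrow$ $\mathrm{uinert}(p@[x\leftarrow i])$; $\mathrm{uinert}(p)$, $x\in un(p)$, $x\notin an(p)$ $\Rightarrow$ $\mathrm{uinert}(p@[x\leftarrow v])$;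 $\mathrm{uinert}(p)$, $x\notin nv(p)$ $\Rightarrow$ $\mathrm{uinert}(p@[x\leftarrow t])$. Unfolding: $\mathrm{unf}((t,\epsilon)):=t$, $\mathrm{unf}((t,E[x\leftarrow u])):=\mathrm{unf}((t,E))\{x:=u\}$ (capture-avoiding meta-level substitution). *)

(* Defs.v *)
(* Locally nameless syntax for the lambda-calculus with
   explicit substitutions (ES) in program form (t, E). *)
From Stdlib Require Import Arith Bool.

(* Variables are natural numbers. Lambda-bound variables are de Bruijn
   indices (BVar), free variables / ES-bound variables are names (Fvar).
   Paper terms correspond to locally closed terms (lc). *)
Inductive term : Type :=
| BVar : nat -> term
| Fvar : nat -> term
| Abs  : term -> term
| App  : term -> term -> term.

Inductive env : Type :=
| Eps  : env
| Snoc : env -> nat -> term -> env.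

Definition prog : Type := (term * env)%type.

Definition app_es (p : prog) (x : nat) (u : term) : prog :=
  (fst p, Snoc (snd p) x u).

Fixpoint lc_at (k : nat) (t : term) : bool :=
  match t with
  | BVar n => n <? k
  | Fvar _ => true
  | Abs b => lc_at (S k) b
  | App a b => lc_at k a && lc_at k b
  end.
Definition lc (t : term) : bool := lc_at 0 t.

Fixpoint fvt (t : term) (y : nat) : bool :=
  match t with
  | BVar _ => false
  | Fvar x => Nat.eqb x y
  | Abs b => fvt b y
  | App a b => fvt a y || fvt b y
  end.

Fixpoint in_dom (E : env) (y : nat) : bool :=
  match E with
  | Eps => false
  | Snoc E x _ => Nat.eqb x y || in_dom E y
  end.

(* Well-formed representative of an alpha-class of programs
   (Barendregt convention on ES binders): all terms locally closed,
   ES binders pairwise distinct, and the variables bound by the ES of E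
   and by [x <- u] itself do not occur free in u. *)
Fixpoint wf_env (t : term) (E : env) : Prop :=
  match E with
  | Eps => lc t = true
  | Snoc E x u =>
      wf_env t E /\ lc u = true /\ in_dom E x = false /\ fvt u x = false /\
      (forall y, in_dom E y = true -> fvt u y = false)
  end.
Definition wf (p : prog) : Prop := wf_env (fst p) (snd p).

Definition is_var (t : term) : bool :=
  match t with Fvar _ => true | _ => false end.

Definition is_value (t : term) : Prop := exists b, t = Abs b.

Inductive inert : term -> Prop :=
| inert_var : forall x, inert (Fvar x)
| inert_app : forall i f, inert i -> fireball f -> inert (App i f)
with fireball : term -> Prop :=
| fireball_val : forall v, is_value v -> fireball v
| fireball_inert : forall i, inert i -> fireball i.

Inductive ninert : term -> Prop :=
| ninert_app : forall i f, inert i -> fireball f -> ninert (App i f).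

(* needed variables *)
Fixpoint nvt (t : term) (y : nat) : bool :=
  match t with
  | BVar _ => false
  | Fvar x => Nat.eqb x y
  | Abs _ => false
  | App a b => nvt a y || nvt b y
  end.

Fixpoint nvE (t : term) (E : env) (y : nat) : bool :=
  match E with
  | Eps => nvt t y
  | Snoc E x u =>
      if nvE t E x then (nvE t E y && negb (Nat.eqb y x)) || nvt u y
      else nvE t E y
  end.
Definition nv (p : prog) : nat -> bool := nvE (fst p) (snd p).

(* applied variables *)
Fixpoint ant (t : term) (y : nat) : bool :=
  match t with
  | BVar _ => false
  | Fvar _ => false
  | Abs _ => false
  | App a b =>
      match a with
      | Fvar x => Nat.eqb x y || ant b y
      | _ => ant a y || ant b y
      end
  end.

Fixpoint anE (t : term) (E : env) (y : nat) : bool :=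
  match E with
  | Eps => ant t y
  | Snoc E x u =>
      if nvE t E x then
        if anE t E x then
          match u with
          | Fvar z => (anE t E y && negb (Nat.eqb y x)) || Nat.eqb z y
          | _ => (anE t E y && negb (Nat.eqb y x)) || ant u y
          end
        else (anE t E y && negb (Nat.eqb y x)) || ant u y
      else anE t E y
  end.
Definition an (p : prog) : nat -> bool := anE (fst p) (snd p).

(* unapplied variables *)
Fixpoint unt (t : term) (y : nat) : bool :=
  match t with
  | BVar _ => false
  | Fvar x => Nat.eqb x y
  | Abs _ => false
  | App a b =>
      match a with
      | Fvar _ | BVar _ => unt b y
      | _ => unt a y || unt b y
      end
  end.

Fixpoint unE (t : term) (E : env) (y : nat) : bool :=
  match E with
  | Eps => unt t y
  | Snoc E x u =>
      if unE t E x || (nvE t E x && negb (is_var u))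
      then (unE t E y && negb (Nat.eqb y x)) || unt u y
      else unE t E y
  end.
Definition un (p : prog) : nat -> bool := unE (fst p) (snd p).

Inductive gvar : nat -> prog -> Prop :=
| gvar_base : forall x, gvar x (Fvar x, Eps)
| gvar_ren : forall x y p, gvar x p -> gvar y (app_es p x (Fvar y))
| gvar_skip : forall x z t p, gvar x p -> z <> x -> gvar x (app_es p z t).

Inductive uabs : prog -> Prop :=
| uabs_base : forall v, is_value v -> uabs (v, Eps)
| uabs_gvar : forall x p v, gvar x p -> is_value v -> uabs (app_es p x v)
| uabs_skip : forall x p t, uabs p -> uabs (app_es p x t).

Inductive uinert : prog -> Prop :=
| uinert_base : forall i, ninert i -> uinert (i, Eps)
| uinert_gvar : forall x p i, gvar x p -> ninert i -> uinert (app_es p x i)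
| uinert_inert : forall x p i, uinert p -> nv p x = true -> inert i ->
    uinert (app_es p x i)
| uinert_val : forall x p v, uinert p -> un p x = true -> an p x = false ->
    is_value v -> uinert (app_es p x v)
| uinert_skip : forall x p t, uinert p -> nv p x = false ->
    uinert (app_es p x t).

(* unfolding; substitution of a name by a (locally closed) term is
   capture-avoiding in the locally nameless representation *)
Fixpoint subst (x : nat) (u : term) (t : term) : term :=
  match t with
  | BVar n => BVar n
  | Fvar y => if Nat.eqb y x then u else Fvar y
  | Abs b => Abs (subst x u b)
  | App a b => App (subst x u a) (subst x u b)
  end.

Fixpoint unfE (t : term) (E : env) : term :=
  match E with
  | Eps => t
  | Snoc E x u => subst x u (unfE t E)
  end.
Definition unf (p : prog) : term := unfE (fst p) (snd p).

(* Main.v *)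
Require Import Defs.
From Stdlib Require Import Arith Bool.

Lemma unf_app_es p x u : unf (app_es p x u) = subst x u (unf p).
Proof. destruct p; reflexivity. Qed.

Ltac bcase :=
  repeat match goal with
  | |- context[nvt ?a ?v] => let H := fresh in destruct (nvt a v) eqn:H
  | |- context[ant ?a ?v] => let H := fresh in destruct (ant a v) eqn:H
  | |- context[Nat.eqb ?a ?v] => let H := fresh in destruct (Nat.eqb a v) eqn:H
  end; simpl; try reflexivity.

Ltac eqcase :=
  repeat match goal with |- context[Nat.eqb ?a ?b] => destruct (Nat.eqb_spec a b) end;
  subst; simpl; try reflexivity; try congruence;
  try (apply Nat.eqb_neq; assumption);
  repeat match goal with H : ?a <> ?b |- _ => let E := fresh in assert (E : Nat.eqb a b = false) by (apply Nat.eqb_neq; exact H); rewrite ?E; clear H end; simpl; rewrite ?Nat.eqb_refl; try reflexivity.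

Lemma nvt_subst x u y T :
  nvt (subst x u T) y = if nvt T x then (nvt T y && negb (Nat.eqb y x)) || nvt u y else nvt T y.
Proof.
  destruct (Nat.eqb_spec y x) as [->|Hyx].
  - induction T; simpl; auto.
    + eqcase.
    + rewrite IHT1, IHT2. bcase.
  - induction T; simpl; auto.
    + eqcase.
    + rewrite IHT1, IHT2. bcase.
Qed.

Lemma ant_nvt T y : ant T y = true -> nvt T y = true.
Proof.
  induction T; simpl; try discriminate; intros H.
  destruct T1; simpl in *; rewrite ?orb_true_iff in *; intuition.
Qed.

Lemma ant_app_nonvar a b y : is_var a = false -> ant (App a b) y = ant a y || ant b y.
Proof. destruct a; simpl; try discriminate; auto. Qed.

Lemma match_nonvar u (A : nat -> bool) B : is_var u = false ->
  match u with Fvar z => A z | _ => B end = B.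
Proof. destruct u; simpl; congruence. Qed.

Lemma is_var_subst x u T : is_var T = false -> is_var (subst x u T) = false.
Proof. destruct T; simpl; congruence. Qed.

Ltac antpre1 T x :=
  let H1 := fresh in
  destruct (ant T x) eqn:H1; [rewrite (ant_nvt _ _ H1)|].

Ltac ysplit y x :=
  let n := fresh in
  destruct (Nat.eqb_spec y x) as [->|n];
  [rewrite ?Nat.eqb_refl
  | rewrite ?(proj2 (Nat.eqb_neq y x) n), ?(proj2 (Nat.eqb_neq x y) (not_eq_sym n))].

Lemma ant_subst_gen x u y (B : bool) T :
  (is_var u = true -> forall z, u = Fvar z -> B = Nat.eqb z y) ->
  (is_var u = false -> B = ant u y) ->
  ant (subst x u T) y =
  if nvt T x then
    (if ant T x then (ant T y && negb (Nat.eqb y x)) || B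
     else (ant T y && negb (Nat.eqb y x)) || ant u y)
  else ant T y.
Proof.
  intros HB1 HB2. induction T.
  - reflexivity.
  - simpl. destruct (Nat.eqb_spec n x).
    + subst. rewrite ?Nat.eqb_refl. simpl. reflexivity.
    + reflexivity.
  - reflexivity.
  - destruct (is_var T1) eqn:HT1.
    + destruct T1; try discriminate. simpl subst. destruct (Nat.eqb_spec n x) as [->|n0].
      * destruct (is_var u) eqn:Hu.
        -- destruct u as [|z| |]; try discriminate. specialize (HB1 eq_refl z eq_refl). subst B.
           simpl. rewrite IHT2. simpl. rewrite ?Nat.eqb_refl. simpl.
           ysplit y x; antpre1 T2 x; bcase.
        -- pose proof (HB2 eq_refl) as EB; subst B. rewrite ant_app_nonvar by assumption. rewrite IHT2.
           simpl. rewrite ?Nat.eqb_refl. simpl.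
           ysplit y x; antpre1 T2 x; bcase. 
      * simpl. rewrite IHT2.
        ysplit y x; rewrite ?(proj2 (Nat.eqb_neq n x) n0), ?(proj2 (Nat.eqb_neq x n) (not_eq_sym n0)); simpl; antpre1 T2 x; bcase.
    + change (subst x u (App T1 T2)) with (App (subst x u T1) (subst x u T2)).
      rewrite (ant_app_nonvar (subst x u T1)) by (apply is_var_subst; auto).
      rewrite !(ant_app_nonvar T1) by auto. rewrite IHT1, IHT2. simpl.
      destruct (is_var u) eqn:Hu;
      [destruct u as [|z| |]; try discriminate; simpl ant in * | pose proof (HB2 eq_refl) as EB; subst B];
      ysplit y x; antpre1 T1 x; antpre1 T2 x; bcase; try (destruct B; reflexivity).
Qed.

Lemma nv_unf t E y : nvt (unfE t E) y = nvE t E y.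
Proof.
  revert y. induction E; intros y; simpl; auto.
  rewrite nvt_subst, !IHE. reflexivity.
Qed.

Lemma an_unf t E y : ant (unfE t E) y = anE t E y.
Proof.
  revert y. induction E as [|E IHE x u]; intros y; simpl; auto.
  rewrite (ant_subst_gen x u y (match u with Fvar z => Nat.eqb z y | _ => ant u y end)).
  - rewrite !nv_unf, !IHE. destruct u; reflexivity.
  - intros _ z ->. reflexivity.
  - destruct u; simpl; congruence.
Qed.

Scheme inert_ind2 := Induction for inert Sort Prop
  with fireball_ind2 := Induction for fireball Sort Prop.

Lemma value_subst x u v : is_value v -> is_value (subst x u v).
Proof. intros [b ->]. simpl. eexists; reflexivity. Qed.

Lemma subst_inert x u : inert u ->
  (forall T, inert T -> inert (subst x u T)) /\ (forall T, fireball T -> fireball (subst x u T)).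
Proof.
  intros Hu. split.
  - apply (inert_ind2 (fun T _ => inert (subst x u T)) (fun T _ => fireball (subst x u T))).
    + intros y. simpl. destruct (Nat.eqb y x); auto. constructor.
    + intros. simpl. constructor; auto.
    + intros. apply fireball_val, value_subst; auto.
    + intros. apply fireball_inert; auto.
  - apply (fireball_ind2 (fun T _ => inert (subst x u T)) (fun T _ => fireball (subst x u T))).
    + intros y. simpl. destruct (Nat.eqb y x); auto. constructor.
    + intros. simpl. constructor; auto.
    + intros. apply fireball_val, value_subst; auto.
    + intros. apply fireball_inert; auto.
Qed.

Lemma subst_nn x u :
  (forall T, inert T -> nvt T x = false -> inert (subst x u T)) /\
  (forall T, fireball T -> nvt T x = false -> fireball (subst x u T)).
Proof.
  split.
  - apply (inert_ind2 (fun T _ => nvt T x = false -> inert (subst x u T))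
                      (fun T _ => nvt T x = false -> fireball (subst x u T))).
    + intros y H. simpl in *. rewrite H. constructor.
    + intros i f Hi IH Hf IHf H. simpl in *. apply orb_false_iff in H as [H1 H2].
      constructor; auto.
    + intros. apply fireball_val, value_subst; auto.
    + intros. apply fireball_inert; auto.
  - apply (fireball_ind2 (fun T _ => nvt T x = false -> inert (subst x u T))
                      (fun T _ => nvt T x = false -> fireball (subst x u T))).
    + intros y H. simpl in *. rewrite H. constructor.
    + intros i f Hi IH Hf IHf H. simpl in *. apply orb_false_iff in H as [H1 H2].
      constructor; auto.
    + intros. apply fireball_val, value_subst; auto.
    + intros. apply fireball_inert; auto.
Qed.

Lemma subst_val x v : is_value v ->
  (forall T, inert T -> ant T x = false -> T <> Fvar x -> inert (subst x v T)) /\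
  (forall T, fireball T -> ant T x = false -> fireball (subst x v T)).
Proof.
  intros Hv.
  assert (Hi : forall T, inert T -> ant T x = false -> T <> Fvar x -> inert (subst x v T)).
  { apply (inert_ind2 (fun T _ => ant T x = false -> T <> Fvar x -> inert (subst x v T))
                      (fun T _ => ant T x = false -> fireball (subst x v T))).
    + intros y _ H. simpl. destruct (Nat.eqb_spec y x); [congruence|constructor].
    + intros i f Hi IH Hf IHf H _. simpl. constructor.
      * destruct i; simpl in *.
        -- inversion Hi.
        -- destruct (Nat.eqb_spec n x). subst. rewrite ?Nat.eqb_refl in H. discriminate. constructor.
        -- inversion Hi.
        -- apply orb_false_iff in H as [H1 H2]. apply IH; auto; discriminate.
      * apply IHf. destruct i; simpl in *; auto; apply orb_false_iff in H; tauto.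
    + intros. apply fireball_val, value_subst; auto.
    + intros i Hi IH H. destruct i; simpl in *.
      * inversion Hi.
      * destruct (Nat.eqb n x) ; [apply fireball_val; auto | apply fireball_inert; constructor].
      * inversion Hi.
      * apply fireball_inert. apply IH; auto. discriminate. }
  split; auto.
  intros T HT H. destruct HT.
  - apply fireball_val, value_subst; auto.
  - destruct i; simpl in *.
    + inversion H0.
    + destruct (Nat.eqb n x) ; [apply fireball_val; auto | apply fireball_inert; constructor].
    + inversion H0.
    + apply fireball_inert. apply (Hi (App i1 i2)); auto; discriminate.
Qed.

Lemma ant_app_false i f x : ant (App i f) x = false ->
  ant i x = false /\ ant f x = false /\ i <> Fvar x.
Proof.
  destruct i; simpl; intros H; try (apply orb_false_iff in H; destruct H);
    repeat split; auto; try discriminate.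
  intros E; inversion E; subst. rewrite Nat.eqb_refl in H. discriminate.
Qed.

Lemma gvar_unf x p : gvar x p -> unf p = Fvar x.
Proof.
  induction 1; rewrite ?unf_app_es; try reflexivity.
  - rewrite IHgvar. simpl. rewrite Nat.eqb_refl. reflexivity.
  - rewrite IHgvar. simpl. destruct (Nat.eqb_spec x z); congruence.
Qed.

Lemma uabs_unf p : uabs p -> is_value (unf p).
Proof.
  induction 1; rewrite ?unf_app_es; auto.
  - rewrite (gvar_unf _ _ H). simpl. rewrite Nat.eqb_refl. auto.
  - apply value_subst; auto.
Qed.

Lemma uinert_unf p : uinert p -> ninert (unf p).
Proof.
  induction 1; rewrite ?unf_app_es; auto.
  - rewrite (gvar_unf _ _ H). simpl. rewrite Nat.eqb_refl. auto.
  - inversion IHuinert as [i0 f Hi Hf E]. simpl. constructor.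
    + apply (subst_inert x i H1); auto.
    + apply (subst_inert x i H1); auto.
  - assert (Ha : ant (unf p) x = false).
    { unfold unf, an in *. rewrite an_unf. auto. }
    inversion IHuinert as [i0 f Hi Hf E]. rewrite <- E in Ha.
    apply ant_app_false in Ha as [Ha1 [Ha2 Ha3]]. simpl. constructor.
    + apply (subst_val x v H2); auto.
    + apply (subst_val x v H2); auto.
  - assert (Ha : nvt (unf p) x = false).
    { unfold unf, nv in *. rewrite nv_unf. auto. }
    inversion IHuinert as [i0 f Hi Hf E]. rewrite <- E in Ha. simpl in Ha.
    apply orb_false_iff in Ha as [Ha1 Ha2]. simpl. constructor.
    + apply (subst_nn x t); auto.
    + apply (subst_nn x t); auto.
Qed.

Theorem mainTheorem7 (p : prog) (Hwf : wf p) :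
  (~ ((exists x, gvar x p) /\ uabs p) /\
   ~ ((exists x, gvar x p) /\ uinert p) /\
   ~ (uabs p /\ uinert p)) /\
  (forall x, gvar x p -> unf p = Fvar x) /\
  (uabs p -> is_value (unf p)) /\
  (uinert p -> ninert (unf p)).
Proof.
  split; [|split; [exact (fun x => gvar_unf x p) | split; [apply uabs_unf | apply uinert_unf]]].
  split; [|split].
  - intros [[x Hg] Ha]. apply gvar_unf in Hg. apply uabs_unf in Ha.
    destruct Ha as [b Hb]. congruence.
  - intros [[x Hg] Hi]. apply gvar_unf in Hg. apply uinert_unf in Hi.
    rewrite Hg in Hi. inversion Hi.
  - intros [Ha Hi]. apply uabs_unf in Ha. apply uinert_unf in Hi.
    destruct Ha as [b Hb]. rewrite Hb in Hi. inversion Hi.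
Qed.
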